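(* Suppose problem (CP0-group) has a unique solution $v^*\in\mathbb{C}^M$. Suppose further that $x^*:=\nu^{-1}(v^* )\neq0$ and that $y_i=|q_i^Hx^*|^2$ for $i=1,\dots,N$. Then the solution set of problem (CP0) is exactly $T(x^* )$.
   Context: Complex setting. Let $n,N\ge1$ and $M=n(n+1)/2$. Components of vectors in $\mathbb{C}^M$ are indexed by unordered pairs: for $1\le i,j\le n$ the symmetric index $ij$ ($=ji$) is $\sum_{k=1}^{\min\{i,j\}-1}(n-k+1)+|j-i|+1$, a bijection onto $\{1,\dots,M\}$. The complex Veronese map $\nu:\mathbb{C}^n\to\mathbb{C}^M$ is $(\nu(x))_{ij}=x_i\overline{x_j}$ for $i\le j$. For $j=1,\dots,n$, $W_j$ is the $n\times M$ binary matrix with $(W_j)_{k,l}=1$ iff $l$ is the index $jk$, so $W_jv=(v_{j1},\dots,v_{jn})^T$. $\|x\|_0$ is the number of nonzero entries of $x$. For vectors $u_1,\dots,u_n$, $\|\{u_j\}_{j=1}^n\|_0$ is the number of $j$ with $u_j\ne0$. For $x\in\mathbb{C}^n$, $T(x)=\{zx: z\in\mathbb{C},\ |z|=1\}$. Data: $q_1,\dots,q_N\in\mathbb{C}^n$ and $y\in\mathbb{R}^N$. Define $a_i\in\mathbb{C}^M$ by $(a_i)_{jk}=2q_{ij}\overline{q_{ik}}$ for $j<k$ and $(a_i)_{jj}=|q_{ij}|^2$, i.e. $a_i$ is $\nu(q_i)$ with off-diagonal entries doubled. Let $A=[a_1,\dots,a_N]^H\in\mathbb{C}^{N\times M}$,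 so the $i$-th row of $A$ is $a_i^H$. Inverse map $\nu^{-1}:\mathbb{C}^M\to\mathbb{C}^n$. Let $i$ be the smallest $j$ with $\mathrm{Re}(v_{jj})>0$ and $\mathrm{Im}(v_{jj})=0$ ($i=0$ if none exists). If $i>0$ and $|v_{ji}|^2/v_{ii}=v_{jj}$ for all $j=1,\dots,n$, then $\nu^{-1}(v)=\frac{1}{\sqrt{v_{ii}}}(\overline{v_{1i}},\dots,\overline{v_{ni}})^T$, with $\sqrt{v_{ii}}>0$. Otherwise $\nu^{-1}(v)=0$. (CP0): $\min_{x\in\mathbb{C}^n}\|x\|_0$ subject to $y_i=|q_i^Hx|^2$ for $i=1,\dots,N$. (CP0-group): $\min_{v\in\mathbb{C}^M}\|\{W_jv\}_{j=1}^n\|_0$ subject to $y=\mathrm{Re}(Av)$ and $v_{jj}$ real and nonnegative for $j=1,\dots,n$. *)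

(* Defs.v *)
(* The complex field C is modelled by an arbitrary
   numClosedFieldType (e.g. algC). *)
From HB Require Import structures.
From mathcomp Require Import all_boot all_order all_algebra.
Set Implicit Arguments. Unset Strict Implicit. Unset Printing Implicit Defensive.
Import Order.TTheory GRing.Theory Num.Theory.

Definition Mdim (n : nat) : nat := (n * n.+1)./2.

(* 0-based version of the symmetric index:
   1-based  ij = \sum_{k=1}^{min(i,j)-1} (n-k+1) + |j-i| + 1.
   With i' = i-1, j' = j-1 (0-based) and result shifted by -1 this is
   \sum_{k < min(i',j')} (n-k) + |j'-i'|. *)
Definition symidx_nat (n i j : nat) : nat :=
  \sum_(0 <= k < minn i j) (n - k) + (maxn i j - minn i j).

Lemma sum_tri n : \sum_(0 <= k < n) (n - k) = Mdim n.
Proof.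
rewrite /Mdim; apply/esym; elim: n => [|n IH]; first by rewrite big_geq.
rewrite big_nat_recl // subn0.
under eq_big_nat => k _ do rewrite subSS.
rewrite -IH.
have -> : n.+1 * n.+2 = n * n.+1 + (n.+1).*2.
  by rewrite -(addn2 n) mulnDr [n.+1 * n]mulnC muln2.
rewrite halfD odd_double andbF /= doubleK.
by rewrite add0n addnC.
Qed.

Lemma symidx_lt n (i j : 'I_n) : symidx_nat n i j < Mdim n.
Proof.
rewrite /symidx_nat -sum_tri.
set a := minn i j; set b := maxn i j.
have ha : a <= b := leq_trans (geq_minl i j) (leq_maxl i j).
have hb : b < n by rewrite gtn_max !ltn_ord.
have han : a < n := leq_ltn_trans ha hb.
rewrite (@big_cat_nat _ _ _ a 0 n _ _ (leq0n a) (ltnW han)) /= ltn_add2l big_ltn //.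
apply: leq_trans (leq_addr _ _).
by rewrite ltn_subRL subnKC.
Qed.

Local Open Scope ring_scope.

Section Defs.
Variable C : numClosedFieldType.
Variables n N : nat.

Definition sym (i j : 'I_n) : 'I_(Mdim n) := Ordinal (symidx_lt i j).

(* Complex Veronese map: (nu x)_{ij} = x_i conj(x_j) for i <= j.
   Since sym restricted to {i <= j} is a bijection onto 'I_M, the sum below
   has exactly one term for each entry l. *)
Definition veronese (x : 'cV[C]_n) : 'cV[C]_(Mdim n) :=
  \col_l \sum_(i < n) \sum_(j < n | (i <= j)%N && (sym i j == l))
           x i 0 * (x j 0)^*.

Definition Wmx (j : 'I_n) : 'M[C]_(n, Mdim n) :=
  \matrix_(k, l) (l == sym j k)%:R.

Definition l0 (x : 'cV[C]_n) : nat := #|[set j : 'I_n | x j 0 != 0]|.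

Definition group_l0 (v : 'cV[C]_(Mdim n)) : nat :=
  #|[set j : 'I_n | Wmx j *m v != 0]|.

Definition Torbit (x : 'cV[C]_n) : 'cV[C]_n -> Prop :=
  fun w => exists z : C, `|z| = 1 /\ w = z *: x.

(* a_i : nu(q_i) with off-diagonal entries doubled. *)
Definition avec (qi : 'cV[C]_n) : 'cV[C]_(Mdim n) :=
  \col_l \sum_(j < n) \sum_(k < n | (j <= k)%N && (sym j k == l))
           (if j == k then 1 else 2) * (qi j 0 * (qi k 0)^*).

Definition Amx (q : 'I_N -> 'cV[C]_n) : 'M[C]_(N, Mdim n) :=
  \matrix_(i, l) ((avec (q i)) l 0)^*.

Definition qHx (qi x : 'cV[C]_n) : C := ((map_mx (fun z : C => z^*) qi)^T *m x) 0 0.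

Definition veronese_inv (v : 'cV[C]_(Mdim n)) : 'cV[C]_n :=
  match [seq j <- enum 'I_n | (0 < 'Re (v (sym j j) 0)) && ('Im (v (sym j j) 0) == 0)] with
  | [::] => 0
  | i :: _ =>
      if [forall j : 'I_n, `|v (sym j i) 0| ^+ 2 / v (sym i i) 0 == v (sym j j) 0]
      then (sqrtC (v (sym i i) 0))^-1 *: \col_j (v (sym j i) 0)^*
      else 0
  end.

Definition CP0_feasible (q : 'I_N -> 'cV[C]_n) (y : 'cV[C]_N) (x : 'cV[C]_n) :=
  forall i : 'I_N, y i 0 = `|qHx (q i) x| ^+ 2.

Definition CP0_solution q y (x : 'cV[C]_n) :=
  CP0_feasible q y x /\ forall x', CP0_feasible q y x' -> (l0 x <= l0 x')%N.

Definition CP0g_feasible (q : 'I_N -> 'cV[C]_n) (y : 'cV[C]_N)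
    (v : 'cV[C]_(Mdim n)) :=
  (forall i : 'I_N, y i 0 = 'Re ((Amx q *m v) i 0)) /\
  (forall j : 'I_n, 0 <= v (sym j j) 0).

Definition CP0g_solution q y (v : 'cV[C]_(Mdim n)) :=
  CP0g_feasible q y v /\
  forall v', CP0g_feasible q y v' -> (group_l0 v <= group_l0 v')%N.

End Defs.

(* Main.v *)
Require Import Defs.
From HB Require Import structures.
From mathcomp Require Import all_boot all_order all_algebra ring.
Import Order.TTheory GRing.Theory Num.Theory.
Set Implicit Arguments. Unset Strict Implicit.



Definition Sn n i := \sum_(0 <= k < i) (n - k).

Lemma Sn_mono n a b : a <= b -> Sn n a <= Sn n b.
Proof.
move=> ab; rewrite /Sn (@big_cat_nat _ _ _ a 0 b) //=; exact: leq_addr.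
Qed.

Lemma symidx_le n i j : i <= j -> j < n ->
  Sn n i <= symidx_nat n i j < Sn n i.+1.
Proof.
move=> ij jn; rewrite /symidx_nat /Sn (minn_idPl ij) (maxn_idPr ij).
rewrite big_nat_recr //= leq_addr ltn_add2l.
by rewrite ltn_sub2rE // (leq_ltn_trans ij jn).
Qed.

Lemma symidx_inj n i j i' j' : i <= j -> j < n -> i' <= j' -> j' < n ->
  symidx_nat n i j = symidx_nat n i' j' -> i = i' /\ j = j'.
Proof.
move=> ij jn ij' jn' E.
have /andP[h1 h2] := symidx_le ij jn.
have /andP[h1' h2'] := symidx_le ij' jn'.
have ii : i = i'.
  case: (ltngtP i i') => // lt.
  - have := Sn_mono n lt; rewrite -E in h1'; move=> H.
    by have := leq_ltn_trans (leq_trans H h1') h2; rewrite ltnn.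
  - have := Sn_mono n lt; rewrite E in h1; move=> H.
    by have := leq_ltn_trans (leq_trans H h1) h2'; rewrite ltnn.
subst i'; split => //.
move: E; rewrite /symidx_nat (minn_idPl ij) (maxn_idPr ij) (minn_idPl ij') (maxn_idPr ij').
move/eqP; rewrite eqn_add2l => /eqP E.
by rewrite -(subnK ij) E subnK.
Qed.

Lemma sym_C n (i j : 'I_n) : sym i j = sym j i.
Proof. by apply: val_inj; rewrite /= /symidx_nat minnC maxnC. Qed.

Lemma sym_inj n (i j i' j' : 'I_n) : i <= j -> i' <= j' ->
  sym i j = sym i' j' -> i = i' /\ j = j'.
Proof.
move=> ij ij' /(congr1 val) /= E.
have [] := symidx_inj ij (ltn_ord j) ij' (ltn_ord j') E.
by move=> /val_inj -> /val_inj ->.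
Qed.


Local Open Scope ring_scope.

Lemma sym_cond n (i0 j0 i j : 'I_n) : (i0 <= j0)%N ->
  ((i <= j)%N && (sym i j == sym i0 j0)) = (i == i0) && (j == j0).
Proof.
move=> h; apply/idP/idP.
- by case/andP=> ij /eqP /(sym_inj ij h) [-> ->]; rewrite !eqxx.
- by case/andP=> /eqP -> /eqP ->; rewrite h eqxx.
Qed.

Lemma sum_sym (R : nmodType) n (F : 'I_n -> 'I_n -> R) (i0 j0 : 'I_n) :
  (i0 <= j0)%N ->
  \sum_(i < n) \sum_(j < n | (i <= j)%N && (sym i j == sym i0 j0)) F i j = F i0 j0.
Proof.
move=> h.
under eq_bigr => i _ do rewrite (eq_bigl _ _ (fun j => sym_cond i j h)).
rewrite (bigD1 i0) //= [X in _ + X]big1 ?addr0; last first.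
  by move=> i /negbTE hi; apply: big1 => j; rewrite hi.
rewrite (eq_bigl (fun j => j == j0)) ?big_pred1_eq // => j.
by rewrite eqxx.
Qed.

Section S.
Variable C : numClosedFieldType.
Variable n : nat.
Implicit Types x : 'cV[C]_n.

Lemma ver_sym x (i j : 'I_n) : (i <= j)%N -> veronese x (sym i j) 0 = x i 0 * (x j 0)^*.
Proof. by move=> h; rewrite mxE sum_sym. Qed.

Lemma ver_sym' x (i j : 'I_n) :
  veronese x (sym i j) 0 = if (i <= j)%N then x i 0 * (x j 0)^* else x j 0 * (x i 0)^*.
Proof.
case: leqP => h; first exact: ver_sym.
by rewrite sym_C ver_sym // ltnW.
Qed.

Lemma Wmx_mul (j : 'I_n) (v : 'cV[C]_(Mdim n)) k : (Wmx C j *m v) k 0 = v (sym j k) 0.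
Proof.
rewrite mxE (bigD1 (sym j k)) //= mxE eqxx mul1r big1 ?addr0 // => l /negbTE hl.
by rewrite mxE hl mul0r.
Qed.

Lemma group_l0_ver x : group_l0 (veronese x) = l0 x.
Proof.
rewrite /group_l0 /l0; apply: eq_card => j; rewrite !inE.
apply/idP/idP.
- apply: contraNN => /eqP xj; apply/eqP/matrixP => k l.
  rewrite ord1 Wmx_mul ver_sym' !mxE xj conjC0.
  by case: ifP; rewrite ?mulr0 ?mul0r.
- move=> xj; apply/negP => /eqP /matrixP /(_ j 0).
  rewrite Wmx_mul ver_sym // mxE => /eqP.
  by rewrite mul_conjC_eq0 (negbTE xj).
Qed.

Lemma l0_inv (v : 'cV[C]_(Mdim n)) : (l0 (veronese_inv v) <= group_l0 v)%N.
Proof.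
rewrite /veronese_inv.
case: [seq _ <- _ | _] => [|i _].
  rewrite /l0 (_ : [set j | _] = set0) ?cards0 //.
  by apply/setP => j; rewrite !inE mxE eqxx.
case: ifP => _; last first.
  rewrite /l0 (_ : [set j | _] = set0) ?cards0 //.
  by apply/setP => j; rewrite !inE mxE eqxx.
apply: subset_leq_card; apply/subsetP => j; rewrite !inE !mxE.
rewrite mulf_eq0 negb_or => /andP[_ h].
apply: contraNN h => /eqP /matrixP /(_ i 0); rewrite Wmx_mul mxE => ->.
by rewrite conjC0.
Qed.

End S.


Local Open Scope ring_scope.

Section S.
Variable C : numClosedFieldType.
Variable n : nat.

Lemma half2 (x : C) : (x + x) / 2 = x.
Proof. by rewrite -mulr2n -[x *+ 2]mulr_natr mulfK // pnatr_eq0. Qed.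

Definition cc (j k : 'I_n) : C := if j == k then 1 else 2.

Lemma sum_symm (g : 'I_n -> 'I_n -> C) : (forall j k, g j k = g k j) ->
  \sum_(j < n) \sum_(k < n) g j k = \sum_(j < n) \sum_(k < n) (if (j <= k)%N then cc j k * g j k else 0).
Proof.
move=> gs.
pose H (j k : 'I_n) := if (k < j)%N then g j k else 0.
pose H' (j k : 'I_n) := if (j < k)%N then g j k else 0.
have E : \sum_(j < n) \sum_(k < n) H j k = \sum_(j < n) \sum_(k < n) H' j k.
  rewrite exchange_big; apply: eq_bigr => j _; apply: eq_bigr => k _.
  by rewrite /H /H' gs.
transitivity (\sum_(j < n) \sum_(k < n) ((if (j <= k)%N then cc j k * g j k else 0) - H' j k + H j k)).
  apply: eq_bigr => j _; apply: eq_bigr => k _.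
  rewrite /H /H' /cc; case: (ltngtP j k) => h.
  - rewrite (_ : (j == k) = false) ?ltnW //; last by rewrite -val_eqE /= ltn_eqF.
    by rewrite addr0 mulr_natl mulr2n addrK.
  - by rewrite subr0 add0r.
  - by rewrite (val_inj h) eqxx mul1r subr0 addr0.
under eq_bigr => j _ do rewrite big_split /= sumrB.
by rewrite big_split /= sumrB E subrK.
Qed.

Lemma Re_quad (w : 'I_n -> C) :
  'Re (\sum_(j < n) \sum_(k < n | (j <= k)%N) cc j k * (w j * (w k)^*)) =
  (\sum_(j < n) w j) * (\sum_(j < n) w j)^*.
Proof.
pose f (j k : 'I_n) := w j * (w k)^*.
set S := \sum_j _.
have ES : S = \sum_(j < n) \sum_(k < n) (if (j <= k)%N then cc j k * f j k else 0).
  by apply: eq_bigr => j _; rewrite big_mkcond.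
have ESc : S^* = \sum_(j < n) \sum_(k < n) (if (j <= k)%N then cc j k * f k j else 0).
  rewrite ES rmorph_sum; apply: eq_bigr => j _; rewrite rmorph_sum.
  apply: eq_bigr => k _; case: ifP => _; last by rewrite rmorph0.
  rewrite !rmorphM /= conjCK [(w j)^* * _]mulrC /f /cc; congr (_ * _).
  by case: ifP => _; [exact: conjC1 | exact: conjC_nat].
have Esum : S + S^* = \sum_(j < n) \sum_(k < n) (f j k + f k j).
  rewrite (sum_symm (g := fun j k => f j k + f k j)); last by move=> j k; rewrite addrC.
  rewrite ESc ES -big_split; apply: eq_bigr => j _; rewrite -big_split.
  apply: eq_bigr => k _; case: (j <= k)%N; last exact: addr0.
  exact: (esym (mulrDr _ _ _)).
have ET : \sum_(j < n) \sum_(k < n) f k j = \sum_(j < n) \sum_(k < n) f j k by rewrite exchange_big.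
rewrite ReE Esum.
under eq_bigr => j _ do rewrite big_split /=.
rewrite big_split /= ET half2.
rewrite rmorph_sum mulr_suml; apply: eq_bigr => j _.
by rewrite mulr_sumr.
Qed.

End S.


Local Open Scope ring_scope.

Lemma head_min n (p : pred 'I_n) (i : 'I_n) r :
  [seq j <- enum 'I_n | p j] = i :: r -> p i /\ forall j : 'I_n, p j -> (i <= j)%N.
Proof.
move=> E.
have srt : sorted (fun a b : 'I_n => (a < b)%N) (enum 'I_n).
  by have := iota_ltn_sorted 0 n; rewrite -val_enum_ord sorted_map.
have trans : transitive (fun a b : 'I_n => (a < b)%N).
  by move=> b a c; apply: ltn_trans.
have := sorted_filter trans p srt; rewrite E /= => pth.
have hall := order_path_min trans pth.
have pi : p i.
  have : i \in [seq j <- enum 'I_n | p j] by rewrite E mem_head.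
  by rewrite mem_filter => /andP[].
split => // j pj.
have : j \in i :: r by rewrite -E mem_filter pj mem_enum.
rewrite inE => /orP[/eqP -> //|jr].
by apply: ltnW; move/allP: hall => /(_ j jr).
Qed.

Section S.
Variable C : numClosedFieldType.
Variables n N : nat.

Lemma sum_ifeq (s : 'I_(Mdim n)) (b : bool) (a : C) :
  \sum_(l < Mdim n) (if b && (s == l) then a else 0) = if b then a else 0.
Proof.
case: b => /=; last by rewrite big1.
rewrite (bigD1 s) //= eqxx big1 ?addr0 // => l hl.
by rewrite eq_sym (negbTE hl).
Qed.

Lemma A_ver (q : 'I_N -> 'cV[C]_n) (x : 'cV[C]_n) i :
  'Re ((Amx q *m veronese x) i 0) = `|qHx (q i) x| ^+ 2.
Proof.
set w := fun j : 'I_n => (q i j 0)^* * x j 0.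
have Eq : qHx (q i) x = \sum_j w j.
  by rewrite /qHx mxE; apply: eq_bigr => j _; rewrite !mxE.
rewrite Eq normCK -(Re_quad w) mxE; congr (Re _).
pose G (j k : 'I_n) := cc C j k * (w j * (w k)^*).
transitivity (\sum_(l < Mdim n) \sum_(j < n) \sum_(k < n)
    (if (j <= k)%N && (sym j k == l) then G j k else 0)).
  apply: eq_bigr => l _; rewrite !mxE rmorph_sum mulr_suml; apply: eq_bigr => j _.
  rewrite rmorph_sum mulr_suml big_mkcond; apply: eq_bigr => k _.
  case: ifP => // /andP[jk /eqP <-].
  rewrite (sum_sym (fun a b => x a 0 * (x b 0)^*)) // /G /w /cc !rmorphM /= conjCK.
  have -> : (if j == k then 1 else 2 : C)^* = if j == k then 1 else 2.
    by case: ifP => _; [exact: conjC1 | exact: conjC_nat].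
  rewrite -!mulrA; congr (_ * _); ring.
rewrite exchange_big /=. rewrite (eq_bigr _ (fun j _ => exchange_big _ _ _ _ _ _)) /=.
apply: eq_bigr => j _; rewrite [RHS]big_mkcond /=; apply: eq_bigr => k _.
exact: sum_ifeq.
Qed.

Lemma feas_ver (q : 'I_N -> 'cV[C]_n) (y : 'cV[C]_N) x :
  CP0_feasible q y x -> CP0g_feasible q y (veronese x).
Proof.
move=> hx; split => [i|j]; first by rewrite hx A_ver.
by rewrite ver_sym // mul_conjC_ge0.
Qed.

Lemma feas_scale (q : 'I_N -> 'cV[C]_n) (y : 'cV[C]_N) x z :
  `|z| = 1 -> CP0_feasible q y x -> CP0_feasible q y (z *: x).
Proof.
move=> hz hx i.
have E : qHx (q i) (z *: x) = z * qHx (q i) x.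
  by rewrite /qHx -scalemxAr !mxE.
by rewrite hx E normrM hz mul1r.
Qed.

Lemma l0_scale (x : 'cV[C]_n) z : z != 0 -> l0 (z *: x) = l0 x.
Proof.
move=> hz; rewrite /l0; apply: eq_card => j; rewrite !inE mxE mulf_eq0.
by rewrite (negbTE hz).
Qed.

Lemma l0_eq0 (x : 'cV[C]_n) : l0 x = 0%N -> x = 0.
Proof.
move=> /eqP; rewrite cards_eq0 => /eqP h; apply/matrixP => j k.
rewrite ord1 mxE; apply/eqP; apply: contraT => hj.
have : j \in [set j | x j 0 != 0] by rewrite inE.
by rewrite h inE.
Qed.

Lemma inv_ver (x : 'cV[C]_n) : x != 0 ->
  exists z : C, `|z| = 1 /\ veronese_inv (veronese x) = z *: x.
Proof.
move=> x0.
set v := veronese x.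
have vjj j : v (sym j j) 0 = `|x j 0| ^+ 2 by rewrite /v ver_sym // normCK.
have pE : forall j, (0 < 'Re (v (sym j j) 0)) && ('Im (v (sym j j) 0) == 0)
                    = (x j 0 != 0).
  move=> j; have hr : `|x j 0| ^+ 2 \is Num.real by rewrite realX ?normr_real.
  rewrite vjj (Creal_ReP _ hr) (Creal_ImP _ hr) eqxx andbT.
  by rewrite lt0r sqrf_eq0 normr_eq0 exprn_ge0 ?andbT // normr_ge0.
rewrite /veronese_inv (eq_filter pE).
case E: [seq j <- enum 'I_n | x j 0 != 0] => [|i r].
  have [j hj] : exists j, x j 0 != 0.
    apply/existsP; apply: contraNT x0; rewrite negb_exists => /forallP h.
    apply/eqP/matrixP => j k; rewrite ord1 mxE.
    by apply/eqP; move: (h j); rewrite negbK.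
  have : j \in [seq j <- enum 'I_n | x j 0 != 0] by rewrite mem_filter hj mem_enum.
  by rewrite E.
have [pi hmin] := head_min E.
have nxi : `|x i 0| != 0 by rewrite normr_eq0.
have nv j : `|v (sym j i) 0| = `|x j 0| * `|x i 0|.
  by rewrite /v ver_sym'; case: ifP => _; rewrite normrM norm_conjC // mulrC.
rewrite (_ : [forall j, _] = true); last first.
  apply/forallP => j; rewrite nv !vjj exprMn mulfK //.
  by rewrite sqrf_eq0.
rewrite vjj sqrCK ?normr_ge0 //.
exists (`|x i 0|^-1 * (x i 0)^*); split.
  by rewrite normrM normfV normr_id norm_conjC mulVf.
apply/matrixP => j k; rewrite ord1 mxE [(\col__ _) j 0]mxE [RHS]mxE /v ver_sym' -!mulrA; congr (_ * _).
case: leqP => h.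
  case: (eqVneq (x j 0) 0) => [->|nz].
    by rewrite mul0r mulr0 conjC0.
  have ij := hmin j nz.
  have -> : j = i by apply: val_inj; apply/eqP; rewrite eqn_leq h ij.
  by rewrite rmorphM /= conjCK.
by rewrite rmorphM /= conjCK.
Qed.
End S.

Unset Implicit Arguments.
Local Open Scope ring_scope.

Theorem theorem3 (C : numClosedFieldType) (n N : nat) (hn : (1 <= n)%N)
    (hN : (1 <= N)%N) (q : 'I_N -> 'cV[C]_n) (y : 'cV[C]_N)
    (hy : forall i : 'I_N, y i 0 \is Num.real)
    (vs : 'cV[C]_(Mdim n))
    (hvs : CP0g_solution q y vs)
    (huniq : forall v, CP0g_solution q y v -> v = vs)
    (hxs : veronese_inv vs != 0)
    (hfeas : forall i : 'I_N, y i 0 = `|qHx (q i) (veronese_inv vs)| ^+ 2) :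
  forall x : 'cV[C]_n, CP0_solution q y x <-> Torbit (veronese_inv vs) x.
Proof.
move=> x.
have fxs : CP0_feasible q y (veronese_inv vs) by [].
have key : forall x', CP0_feasible q y x' -> (l0 (veronese_inv vs) <= l0 x')%N.
  move=> x' hx'; apply: leq_trans (l0_inv vs) _.
  rewrite -group_l0_ver; apply: hvs.2; exact: feas_ver.
split.
- case=> hx hmin.
  have sol : CP0g_solution q y (veronese x).
    split; first exact: feas_ver.
    move=> v' hv'; rewrite group_l0_ver.
    apply: leq_trans (hmin _ fxs) _.
    apply: leq_trans (l0_inv vs) _; exact: hvs.2.
  have ev := huniq _ sol.
  have x0 : x != 0.
    apply/eqP => x0; move: hxs; rewrite -ev x0.
    have := l0_inv (veronese (0 : 'cV[C]_n)); rewrite group_l0_ver.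
    rewrite (_ : l0 (0 : 'cV[C]_n) = 0%N); last first.
      by rewrite /l0; apply/eqP; rewrite cards_eq0; apply/eqP/setP => j; rewrite !inE mxE eqxx.
    rewrite leqn0 => /eqP /l0_eq0 ->; by rewrite eqxx.
  have [z [hz E]] := inv_ver x0.
  have z0 : z != 0 by rewrite -normr_eq0 hz oner_neq0.
  exists z^-1; split; first by rewrite normfV hz invr1.
  by rewrite -ev E scalerA mulVf // scale1r.
- case=> z [hz ->].
  have z0 : z != 0 by rewrite -normr_eq0 hz oner_neq0.
  split; first exact: feas_scale.
  by move=> x' hx'; rewrite l0_scale //; exact: key.
Qed.
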